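(* Let $v>0$ entrywise in $\mathbb{R}^{n\times m}$, $B\in\mathbb{R}^n_{>0}$, and let $\mathcal{B}$, $p(b)$, $\varphi$ be as in the QL-Shmyrev program with optimal value $\varphi^*$ and $p^*=p(b^* )$ for an optimal $(b^*,\delta^* )$. Let $b^0_{ij}=\delta^0_i=\frac{B_i}{m+1}$ for all $i,j$ and define mirror descent iterates $$(b^{t+1},\delta^{t+1})=\arg\min_{(b,\delta)\in\mathcal{B}}\ \langle\nabla\varphi(b^t),b-b^t\rangle+\sum_{i,j}b_{ij}\log\frac{b_{ij}}{b^t_{ij}}+\sum_i\delta_i\log\frac{\delta_i}{\delta^t_i}.$$ Then for all $t\ge1$, $D(p(b^t)\,\|\,p^* )\le\varphi(b^t)-\varphi^*\le\frac{\|B\|_1\log(m+1)}{t}$.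
   Context: QL-Shmyrev program: $\mathcal{B}=\{(b,\delta)\in\mathbb{R}^{n\times m}\times\mathbb{R}^n: b\ge0,\delta\ge0,\sum_jb_{ij}+\delta_i=B_i\ \forall i\}$, $p_j(b)=\sum_ib_{ij}$, $\varphi(b)=-\sum_{i,j}(1+\log v_{ij})b_{ij}+\sum_jp_j(b)\log p_j(b)$, minimized over $\mathcal{B}$; $\nabla\varphi(b)$ has entries $\log(p_j(b)/v_{ij})$. Generalized KL divergence for $p,q\in\mathbb{R}^d_+$: $D(p\|q)=\sum_ip_i\log\frac{p_i}{q_i}-\sum_ip_i+\sum_iq_i$, with $0\log0=0$. *)

(* Defs.v *)
From HB Require Import structures.
From mathcomp Require Import all_boot all_order all_algebra.
From mathcomp Require Import all_classical all_reals all_analysis.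
Set Implicit Arguments. Unset Strict Implicit. Unset Printing Implicit Defensive.
Import Order.TTheory GRing.Theory Num.Theory.
Local Open Scope ring_scope.

Section QLShmyrev.
Variable R : realType.

Definition xlogx (x : R) : R := if x == 0 then 0 else x * ln x.

Definition xlogxy (x y : R) : R := if x == 0 then 0 else x * ln (x / y).

Definition price (n m : nat) (b : 'M[R]_(n, m)) (j : 'I_m) : R :=
  \sum_(i < n) b i j.

Definition inB (n m : nat) (B : 'I_n -> R) (b : 'M[R]_(n, m)) (d : 'I_n -> R)
  : Prop :=
  [/\ forall i j, 0 <= b i j,
      forall i, 0 <= d i
    & forall i, \sum_(j < m) b i j + d i = B i].

Definition phi (n m : nat) (v : 'M[R]_(n, m)) (b : 'M[R]_(n, m)) : R :=
  - (\sum_(i < n) \sum_(j < m) (1 + ln (v i j)) * b i j)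
  + \sum_(j < m) xlogx (price b j).

Definition grad_phi (n m : nat) (v b : 'M[R]_(n, m)) : 'M[R]_(n, m) :=
  \matrix_(i < n, j < m) ln (price b j / v i j).

Definition KLdiv (k : nat) (p q : 'I_k -> R) : R :=
  \sum_(i < k) xlogxy (p i) (q i) - \sum_(i < k) p i + \sum_(i < k) q i.

Definition md_obj (n m : nat) (v : 'M[R]_(n, m)) (bt : 'M[R]_(n, m))
  (dt : 'I_n -> R) (b : 'M[R]_(n, m)) (d : 'I_n -> R) : R :=
  \sum_(i < n) \sum_(j < m) grad_phi v bt i j * (b i j - bt i j)
  + \sum_(i < n) \sum_(j < m) xlogxy (b i j) (bt i j)
  + \sum_(i < n) xlogxy (d i) (dt i).

End QLShmyrev.

(* Main.v *)
Require Import Defs.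
Set Warnings "-notation-overridden,-ambiguous-paths,-notation-incompatible-prefix".
Set Implicit Arguments. Unset Strict Implicit.
From HB Require Import structures.
From mathcomp Require Import all_boot all_order all_algebra.
From mathcomp Require Import all_classical all_reals all_analysis.
From mathcomp Require Import ring lra.
Import Order.TTheory GRing.Theory Num.Theory.
Local Open Scope ring_scope.
Section Scal.
Variable R : realType.
Implicit Types x y w X Y : R.

Definition D1 x y : R := xlogxy x y - x + y.

Lemma xlogxy0 y : xlogxy 0 y = 0. Proof. by rewrite /xlogxy eqxx. Qed.
Lemma xlogxyE x y : 0 < x -> xlogxy x y = x * ln (x / y).
Proof. by move=> h; rewrite /xlogxy gt_eqF. Qed.
Lemma xlogx0 : xlogx (0:R) = 0. Proof. by rewrite /xlogx eqxx. Qed.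
Lemma xlogxE x : 0 < x -> xlogx x = x * ln x.
Proof. by move=> h; rewrite /xlogx gt_eqF. Qed.

Lemma ln_le {z} : 0 < z -> ln z <= z - 1 :> R.
Proof. move=> h; have := expR_ge1Dx (ln z); rewrite lnK ?posrE //; lra. Qed.

Lemma ln_lt {z} : 0 < z -> z != 1 -> ln z < z - 1 :> R.
Proof.
move=> h h1; have := @expR_gt1Dx R (ln z); rewrite lnK ?posrE //.
rewrite ln_eq0 // h1 => /(_ isT); lra.
Qed.

Lemma lndiv x y : 0 < x -> 0 < y -> ln (x / y) = ln x - ln y.
Proof. by move=> hx hy; rewrite ln_div ?posrE. Qed.

Lemma lnMul x y : 0 < x -> 0 < y -> ln (x * y) = ln x + ln y.
Proof. by move=> hx hy; rewrite lnM ?posrE. Qed.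

Lemma D1_ge0 x y : 0 <= x -> 0 < y -> 0 <= D1 x y.
Proof.
rewrite /D1 le_eqVlt => /orP[/eqP <-|hx] hy; first by rewrite xlogxy0; lra.
rewrite xlogxyE //.
have h := ln_le (divr_gt0 hy hx).
rewrite lndiv // in h; rewrite lndiv //.
have e : x * (y / x) = y by field; rewrite gt_eqF.
nra.
Qed.

Lemma xlogx_exp x y : 0 <= x -> 0 < y ->
  xlogx x - xlogx y - (ln y + 1) * (x - y) = D1 x y.
Proof.
rewrite /D1 le_eqVlt => /orP[/eqP <-|hx] hy.
  rewrite xlogx0 xlogxy0 xlogxE //; ring.
rewrite !xlogxE // xlogxyE // lndiv //; ring.
Qed.

Lemma D1_quad x y : 0 <= x -> 0 < y -> D1 x y <= (x - y) ^+ 2 / y.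
Proof.
rewrite /D1 le_eqVlt => /orP[/eqP <-|hx] hy.
  rewrite xlogxy0; have e : (0 - y) ^+ 2 / y = y by field; rewrite gt_eqF.
  by rewrite e; lra.
rewrite xlogxyE //.
have h := ln_le (divr_gt0 hx hy).
have e : (x - y) ^+ 2 / y = x * (x / y) - x - x + y by field; rewrite gt_eqF.
rewrite e; nra.
Qed.

Lemma D1_eq0 x y : 0 <= x -> 0 < y -> D1 x y = 0 -> x = y.
Proof.
rewrite /D1 le_eqVlt => /orP[/eqP <-|hx] hy.
  by rewrite xlogxy0; lra.
rewrite xlogxyE // => H.
have [e1|ne] := eqVneq (y / x) 1.
  by have : y = x by rewrite -[y](@divfK _ x) ?gt_eqF // e1 mul1r.
have h := ln_lt (divr_gt0 hy hx) ne.
rewrite lndiv // in h; rewrite lndiv // in H.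
have e : x * (y / x) = y by field; rewrite gt_eqF.
nra.
Qed.

Lemma xlogxy_shift x y w : 0 <= x -> 0 < y -> 0 < w ->
  xlogxy x y = xlogxy x w + x * ln (w / y).
Proof.
rewrite le_eqVlt => /orP[/eqP <-|hx] hy hw.
  by rewrite !xlogxy0 mul0r addr0.
by rewrite !xlogxyE // !lndiv //; ring.
Qed.

Lemma logsum_term x y X Y : 0 <= x -> 0 < y -> 0 < X -> 0 < Y ->
  x - y * X / Y <= xlogxy x y - x * ln (X / Y).
Proof.
rewrite le_eqVlt => /orP[/eqP <-|hx] hy hX hY.
  rewrite xlogxy0 mul0r subr0 sub0r oppr_le0.
  by apply/ltW/divr_gt0 => //; apply: mulr_gt0.
rewrite xlogxyE //.
have h := ln_le (divr_gt0 (mulr_gt0 hy hX) (mulr_gt0 hx hY)).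
rewrite lndiv ?mulr_gt0 // !lnMul // in h; rewrite !lndiv //.
have e : x * (y * X / (x * Y)) = y * X / Y by field; rewrite !gt_eqF.
nra.
Qed.

End Scal.
Section Sums.
Variables (R : realType) (n m : nat).
Implicit Types (b w v : 'M[R]_(n, m)) (d e : 'I_n -> R).

Definition KLF b d w e : R :=
  \sum_(i < n) \sum_(j < m) xlogxy (b i j) (w i j) + \sum_(i < n) xlogxy (d i) (e i).

Definition lin (v bt b : 'M[R]_(n, m)) : R :=
  \sum_(i < n) \sum_(j < m) grad_phi v bt i j * (b i j - bt i j).

Lemma md_objE v bt dt b d : md_obj v bt dt b d = lin v bt b + KLF b d bt dt.
Proof. by rewrite /md_obj /lin /KLF addrA. Qed.

Definition posz b d := (forall i j, 0 < b i j) /\ (forall i, 0 < d i).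

Lemma KLF_D1 B b d w e : inB B b d -> inB B w e ->
  KLF b d w e = \sum_(i < n) (\sum_(j < m) D1 (b i j) (w i j) + D1 (d i) (e i)).
Proof.
move=> [_ _ hb] [_ _ hw]; rewrite /KLF -big_split /=; apply: eq_bigr => i _.
rewrite /D1 big_split /= big_split /= sumrN.
have := hb i; have := hw i; lra.
Qed.

Lemma KLF_ge0 B b d w e : inB B b d -> inB B w e -> posz w e -> 0 <= KLF b d w e.
Proof.
move=> hb hw [pw pe]; rewrite (KLF_D1 hb hw); apply: sumr_ge0 => i _.
case: hb => hb hd _.
apply: addr_ge0; last exact: D1_ge0.
by apply: sumr_ge0 => j _; exact: D1_ge0.
Qed.

Lemma xlogxy_self (x : R) : xlogxy x x = 0.
Proof.
rewrite /xlogxy; case: eqP => // /eqP h; by rewrite divff // ln1 mulr0.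
Qed.

Lemma KLF_self b d : KLF b d b d = 0.
Proof.
rewrite /KLF !big1 ?addr0 // => i _; rewrite ?xlogxy_self //.
by rewrite big1 // => j _; rewrite xlogxy_self.
Qed.

Lemma phi_diff v b b' : phi v b' - phi v b =
  \sum_(i < n) \sum_(j < m) (- (1 + ln (v i j)) * (b' i j - b i j))
  + \sum_(j < m) (xlogx (price b' j) - xlogx (price b j)).
Proof.
rewrite /phi.
have -> : \sum_(i < n) \sum_(j < m) (- (1 + ln (v i j)) * (b' i j - b i j)) =
  \sum_(i < n) \sum_(j < m) ((1 + ln (v i j)) * b i j)
  - \sum_(i < n) \sum_(j < m) ((1 + ln (v i j)) * b' i j).
  rewrite -sumrB; apply: eq_bigr => i _; rewrite -sumrB; apply: eq_bigr => j _.
  ring.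
rewrite sumrB; lra.
Qed.

Lemma phi_exp v b b' : (forall i j, 0 < v i j) -> (forall j, 0 < price b j) ->
  (forall j, 0 <= price b' j) ->
  phi v b' - phi v b - lin v b b' = \sum_(j < m) D1 (price b' j) (price b j).
Proof.
move=> hv hp hp'; rewrite phi_diff /lin.
have E1 : \sum_(i < n) \sum_(j < m) grad_phi v b i j * (b' i j - b i j) =
  \sum_(i < n) \sum_(j < m) ((ln (price b j) - ln (v i j)) * (b' i j - b i j)).
  by apply: eq_bigr => i _; apply: eq_bigr => j _; rewrite mxE lndiv.
have E2 : \sum_(i < n) \sum_(j < m) (- (1 + ln (v i j)) * (b' i j - b i j)) -
  \sum_(i < n) \sum_(j < m) ((ln (price b j) - ln (v i j)) * (b' i j - b i j)) =
  \sum_(i < n) \sum_(j < m) (- (ln (price b j) + 1) * (b' i j - b i j)).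
  rewrite -sumrB; apply: eq_bigr => i _; rewrite -sumrB; apply: eq_bigr => j _.
  ring.
have E4 : \sum_(i < n) \sum_(j < m) (- (ln (price b j) + 1) * (b' i j - b i j)) =
  \sum_(j < m) (- (ln (price b j) + 1) * (price b' j - price b j)).
  rewrite exchange_big /=.
  by apply: eq_bigr => j _; rewrite -mulr_sumr sumrB.
have E3 : \sum_(j < m) D1 (price b' j) (price b j) =
  \sum_(j < m) (xlogx (price b' j) - xlogx (price b j))
  + \sum_(j < m) (- (ln (price b j) + 1) * (price b' j - price b j)).
  rewrite -big_split /=; apply: eq_bigr => j _; rewrite -xlogx_exp //; ring.
rewrite E3 -E4 -E2 E1; ring.
Qed.

Definition cmb (s : R) b b' : 'M[R]_(n, m) :=
  \matrix_(i, j) ((1 - s) * b i j + s * b' i j).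

Lemma price_cmb s b b' j : price (cmb s b b') j = (1 - s) * price b j + s * price b' j.
Proof.
rewrite /price /cmb; under eq_bigr do rewrite mxE.
by rewrite big_split /= -!mulr_sumr.
Qed.

Lemma inB_cmb B b d b' d' s : inB B b d -> inB B b' d' -> 0 <= s <= 1 ->
  inB B (cmb s b b') (fun i => (1 - s) * d i + s * d' i).
Proof.
move=> [hb hd hs] [hb' hd' hs'] /andP[s0 s1]; split.
- move=> i j; rewrite mxE; have := hb i j; have := hb' i j; nra.
- move=> i; have := hd i; have := hd' i; nra.
- move=> i; rewrite /cmb; under eq_bigr do rewrite mxE.
  rewrite big_split /= -!mulr_sumr; have := hs i; have := hs' i; nra.
Qed.

End Sums.
Section LogSum.
Variable R : realType.

Lemma logsum k (x y : 'I_k -> R) : (forall i, 0 <= x i) -> (forall i, 0 < y i) ->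
  0 < \sum_(i < k) y i ->
  xlogxy (\sum_(i < k) x i) (\sum_(i < k) y i) <= \sum_(i < k) xlogxy (x i) (y i).
Proof.
move=> hx hy hY.
have hX : 0 <= \sum_(i < k) x i by apply: sumr_ge0.
move: hX; rewrite le_eqVlt => /orP[/eqP hX0|hX].
  rewrite -hX0 xlogxy0 big1 // => i _.
  by rewrite (psumr_eq0P (fun i _ => hx i) (esym hX0)) // xlogxy0.
set X := \sum_(i < k) x i; set Y := \sum_(i < k) y i.
have H : \sum_(i < k) (x i - y i * X / Y) <=
         \sum_(i < k) (xlogxy (x i) (y i) - x i * ln (X / Y)).
  by apply: ler_sum => i _; apply: logsum_term => //; apply: ltW.
rewrite !sumrB -!mulr_suml in H.
rewrite xlogxyE //.
have e : Y * X / Y = X by field; rewrite gt_eqF.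
rewrite e subrr -/X subr_ge0 in H; exact: H.
Qed.

End LogSum.

Section Step.
Variables (R : realType) (n m : nat).
Implicit Types (b w v : 'M[R]_(n, m)) (d e : 'I_n -> R).

Lemma price_gt0 b : (0 < n)%N -> (forall i j, 0 < b i j) -> forall j, 0 < price b j.
Proof.
case: n b => // n' b _ hb j; rewrite /price big_ord_recl.
apply: ltr_pwDl => //; apply: sumr_ge0 => i _; exact: ltW.
Qed.

Lemma price_ge0 b : (forall i j, 0 <= b i j) -> forall j, 0 <= price b j.
Proof. by move=> hb j; apply: sumr_ge0. Qed.

Lemma smooth v b b' : (0 < n)%N -> (forall i j, 0 < v i j) -> (forall i j, 0 < b i j) ->
  (forall i j, 0 <= b' i j) ->
  phi v b' <= phi v b + lin v b b' + \sum_(i < n) \sum_(j < m) D1 (b' i j) (b i j).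
Proof.
move=> n0 hv hb hb'.
have := phi_exp hv (price_gt0 n0 hb) (price_ge0 hb').
have : \sum_(j < m) D1 (price b' j) (price b j) <=
       \sum_(i < n) \sum_(j < m) D1 (b' i j) (b i j).
  rewrite exchange_big /=; apply: ler_sum => j _.
  rewrite /D1 /price big_split /= sumrB.
  have := @logsum _ _ (fun i => b' i j) (fun i => b i j) (fun i => hb' i j)
    (fun i => hb i j) (price_gt0 n0 hb j).
  move=> /= h; lra.
lra.
Qed.

Section Upd.
Variables (v b : 'M[R]_(n, m)) (d : 'I_n -> R) (B : 'I_n -> R).
Definition Ee i j := b i j * expR (- grad_phi v b i j).
Definition Zz i := \sum_(j < m) Ee i j + d i.
Definition bh : 'M[R]_(n, m) := \matrix_(i, j) (B i * Ee i j / Zz i).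
Definition dh i := B i * d i / Zz i.

Hypothesis hB : forall i, 0 < B i.
Hypothesis hpos : posz b d.
Hypothesis hfeas : inB B b d.

Lemma Ee_gt0 i j : 0 < Ee i j.
Proof. by apply: mulr_gt0; [case: hpos|apply: expR_gt0]. Qed.

Lemma Zz_gt0 i : 0 < Zz i.
Proof.
apply: ltr_wpDl; last by case: hpos.
by apply: sumr_ge0 => j _; apply: ltW; apply: Ee_gt0.
Qed.

Lemma upd_pos : posz bh dh.
Proof.
split => [i j|i]; rewrite ?mxE; apply: divr_gt0; try apply: mulr_gt0;
  rewrite ?hB ?Ee_gt0 ?Zz_gt0 //; by case: hpos.
Qed.

Lemma upd_feas : inB B bh dh.
Proof.
have [pb pd] := upd_pos; split => [i j|i|i]; try exact: ltW.
rewrite /bh /dh; under eq_bigr do rewrite mxE.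
rewrite -mulr_suml -mulr_sumr.
have hz := Zz_gt0 i.
have e : \sum_(j < m) Ee i j = Zz i - d i by rewrite /Zz; ring.
by rewrite e; field; rewrite gt_eqF.
Qed.

Lemma upd_ident : exists C, forall b' d', inB B b' d' ->
  md_obj v b d b' d' = C + KLF b' d' bh dh.
Proof.
exists (\sum_(i < n) (\sum_(j < m) (- grad_phi v b i j * b i j)
                     + B i * ln (B i / Zz i))).
move=> b' d' [hb' hd' hs'].
have [pb pd] := hpos; have [pbh pdh] := upd_pos.
have H1 : forall i j, xlogxy (b' i j) (b i j) = xlogxy (b' i j) (bh i j)
      + b' i j * (ln (B i / Zz i) - grad_phi v b i j).
  move=> i j; rewrite (xlogxy_shift (hb' i j) (pb i j) (pbh i j)).
  congr (_ + _ * _).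
  have -> : bh i j / b i j = B i / Zz i * expR (- grad_phi v b i j).
    rewrite mxE /Ee; field; rewrite !gt_eqF ?Zz_gt0 //.
  rewrite lnMul ?expRK //; last exact: expR_gt0.
  by apply: divr_gt0; rewrite ?hB ?Zz_gt0.
have H2 : forall i, xlogxy (d' i) (d i) = xlogxy (d' i) (dh i)
      + d' i * ln (B i / Zz i).
  move=> i; rewrite (xlogxy_shift (hd' i) (pd i) (pdh i)).
  congr (_ + _ * ln _); rewrite /dh; field; rewrite !gt_eqF ?Zz_gt0 //.
have K1 : \sum_(i < n) \sum_(j < m) xlogxy (b' i j) (b i j) =
  \sum_(i < n) \sum_(j < m) xlogxy (b' i j) (bh i j) +
  \sum_(i < n) \sum_(j < m) (b' i j * (ln (B i / Zz i) - grad_phi v b i j)).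
  rewrite -big_split; apply: eq_bigr => i _; rewrite -big_split.
  by apply: eq_bigr => j _; rewrite H1.
have K2 : \sum_(i < n) xlogxy (d' i) (d i) =
  \sum_(i < n) xlogxy (d' i) (dh i) + \sum_(i < n) (d' i * ln (B i / Zz i)).
  by rewrite -big_split; apply: eq_bigr => i _; rewrite H2.
have K3 : lin v b b' + \sum_(i < n) \sum_(j < m)
      (b' i j * (ln (B i / Zz i) - grad_phi v b i j))
    + \sum_(i < n) (d' i * ln (B i / Zz i)) =
  \sum_(i < n) (\sum_(j < m) (- grad_phi v b i j * b i j)
                     + B i * ln (B i / Zz i)).
  rewrite /lin -!big_split; apply: eq_bigr => i _ /=.
  rewrite -big_split /=.
  set L := ln (B i / Zz i).
  have -> : \sum_(j < m) (grad_phi v b i j * (b' i j - b i j) +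
      b' i j * (L - grad_phi v b i j)) =
      \sum_(j < m) (- grad_phi v b i j * b i j) + (\sum_(j < m) b' i j) * L.
    by rewrite mulr_suml -big_split; apply: eq_bigr => j _ /=; ring.
  have := hs' i; set S := \sum_(j < m) b' i j; move=> hs; rewrite -hs; ring.
rewrite md_objE /KLF K1 K2 -K3; ring.
Qed.

End Upd.

Lemma step v b d B bn dn : (forall i, 0 < B i) -> posz b d -> inB B b d ->
  inB B bn dn ->
  (forall b' d', inB B b' d' -> md_obj v b d bn dn <= md_obj v b d b' d') ->
  posz bn dn /\ (forall b' d', inB B b' d' ->
     md_obj v b d b' d' = md_obj v b d bn dn + KLF b' d' bn dn).
Proof.
move=> hB hpos hf hn hmin.
have [C hC] := upd_ident v hB hpos.
have fh := upd_feas v hB hpos; have ph := upd_pos v hB hpos.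
have := hmin _ _ fh; rewrite (hC _ _ hn) (hC _ _ fh) KLF_self addr0 => hle.
have hge := KLF_ge0 hn fh ph.
have h0 : KLF bn dn (bh v b d B) (dh v b d B) = 0 by lra.
rewrite (KLF_D1 hn fh) in h0.
have [hbn hdn _] := hn; have [pbh pdh] := ph.
have Hi : forall i, \sum_(j < m) D1 (bn i j) (bh v b d B i j)
                    + D1 (dn i) (dh v b d B i) = 0.
  move=> i; apply: (psumr_eq0P _ h0) => // k _; apply: addr_ge0; last exact: D1_ge0.
  by apply: sumr_ge0 => j _; exact: D1_ge0.
have Eb : bn = bh v b d B.
  apply/matrixP => i j; apply: D1_eq0 => //.
  have /eqP := Hi i; rewrite paddr_eq0; last exact: D1_ge0.
    move=> /andP[/eqP h _]; apply: (psumr_eq0P _ h) => // k _; exact: D1_ge0.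
  by apply: sumr_ge0 => k _; exact: D1_ge0.
have Ed : dn = dh v b d B.
  apply: funext => i; apply: D1_eq0 => //.
  have /eqP := Hi i; rewrite paddr_eq0; last exact: D1_ge0.
    by move=> /andP[_ /eqP h].
  by apply: sumr_ge0 => k _; exact: D1_ge0.
subst bn dn; split => // b' d' hb'.
by rewrite !hC // KLF_self addr0.
Qed.

End Step.
Section Opt.
Variables (R : realType) (n m : nat).
Implicit Types (b w v : 'M[R]_(n, m)) (d e : 'I_n -> R).

Lemma sum_cmb (F : 'I_n -> 'I_m -> R) s b b' :
  \sum_(i < n) \sum_(j < m) F i j * (cmb s b b' i j - b i j) =
  s * \sum_(i < n) \sum_(j < m) F i j * (b' i j - b i j).
Proof.
rewrite mulr_sumr; apply: eq_bigr => i _; rewrite mulr_sumr; apply: eq_bigr => j _.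
rewrite mxE; ring.
Qed.

Lemma FO v B bs ds : (forall i j, 0 < v i j) -> inB B bs ds ->
  (forall b' d', inB B b' d' -> phi v bs <= phi v b') ->
  (forall j, 0 < price bs j) ->
  forall b' d', inB B b' d' -> 0 <= lin v bs b'.
Proof.
move=> hv hs hopt hp b' d' hb'.
set L := lin v bs b'.
set Q := \sum_(j < m) (price b' j - price bs j) ^+ 2 / price bs j.
have hQ : 0 <= Q.
  by apply: sumr_ge0 => j _; apply: divr_ge0; rewrite ?sqr_ge0 // ltW.
have key : forall s, 0 < s <= 1 -> 0 <= s * L + s ^+ 2 * Q.
  move=> s /andP[s0 s1].
  have s01 : 0 <= s <= 1 by rewrite ltW.
  have hf := inB_cmb hs hb' s01.
  have h1 := hopt _ _ hf.
  have [hbc _ _] := hf.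
  have := phi_exp hv hp (price_ge0 hbc).
  have -> : lin v bs (cmb s bs b') = s * L by rewrite /lin sum_cmb.
  have : \sum_(j < m) D1 (price (cmb s bs b') j) (price bs j) <= s ^+ 2 * Q.
    rewrite /Q mulr_sumr; apply: ler_sum => j _.
    apply: le_trans (D1_quad (price_ge0 hbc j) (hp j)) _.
    rewrite price_cmb le_eqVlt; apply/orP; left; apply/eqP.
    by field; rewrite gt_eqF.
  lra.
have [Lge|Llt] := leP 0 L; first by [].
exfalso.
set s := - L / (Q - L).
have hQL : 0 < Q - L by lra.
have s0 : 0 < s by apply: divr_gt0; lra.
have s1 : s <= 1 by rewrite ler_pdivrMr //; lra.
have := key s; rewrite s0 s1 => /(_ isT) h.
have e : s * (Q - L) = - L by rewrite /s; field; rewrite gt_eqF.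
have h2 : 0 <= L + s * Q.
  have : 0 <= s * (L + s * Q) by rewrite mulrDr mulrA -expr2.
  by rewrite pmulr_rge0.
nra.
Qed.

End Opt.
Section PosSec.
Variables (R : realType) (n m : nat).
Implicit Types (b w v : 'M[R]_(n, m)) (d e : 'I_n -> R).

Lemma xlogx_pert (x h s : R) : 0 <= x -> 0 < s -> 0 <= x + s * h ->
  xlogx (x + s * h) - xlogx x <=
  s * ((ln x + 1) * h) + s ^+ 2 * (h ^+ 2 / x)
  + (if x == 0 then xlogx (s * h) - s * h else 0).
Proof.
rewrite le_eqVlt => /orP[/eqP <-|hx] hs hy.
  rewrite eqxx ln0 // invr0 !mulr0 add0r xlogx0; lra.
rewrite gt_eqF // addr0.
have := xlogx_exp hy hx; have := D1_quad hy hx.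
have e : (x + s * h - x) ^+ 2 / x = s ^+ 2 * (h ^+ 2 / x) by field; rewrite gt_eqF.
rewrite e; have e2 : x + s * h - x = s * h by ring.
rewrite e2; lra.
Qed.

Lemma POS v B bs ds : (0 < n)%N -> (forall i j, 0 < v i j) -> (forall i, 0 < B i) ->
  inB B bs ds -> (forall b' d', inB B b' d' -> phi v bs <= phi v b') ->
  forall j, 0 < price bs j.
Proof.
move=> n0 hv hB hs hopt j0.
have [hbs hds hrs] := hs.
have := price_ge0 hbs j0; rewrite le_eqVlt => /orP[/eqP hp0|] //; exfalso.
have col0 : forall i, bs i j0 = 0.
  have hp0' : \sum_(i < n) bs i j0 = 0 := esym hp0.
  move=> i; apply: (psumr_eq0P _ hp0') => // k _; exact: hbs.
set i0 := Ordinal n0.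
set b' : 'M[R]_(n, m) := \matrix_(i, j)
  (if i == i0 then (if j == j0 then B i else 0) else bs i j).
set d' := fun i => if i == i0 then 0 else ds i.
have hf : inB B b' d'.
  split => [i j|i|i]; rewrite /b' /d' ?mxE.
  - by case: (i == i0); case: (j == j0); rewrite ?hbs // ltW.
  - by case: (i == i0).
  - under eq_bigr do rewrite mxE.
    case: (i == i0); last exact: hrs.
    by rewrite -big_mkcond big_pred1_eq addr0.
have [hb' hd' _] := hf.
set P := price b' j0.
have hP : 0 < P.
  rewrite /P /price (bigD1 i0) //= {1}/b' mxE !eqxx.
  apply: ltr_pwDl => //; apply: sumr_ge0 => i _; exact: hb'.
have off : forall j, price bs j = 0 -> j != j0 -> price b' j = 0.
  move=> j hj hjj; apply/eqP; rewrite eq_le price_ge0 // andbT -hj.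
  apply: ler_sum => i _; rewrite /b' mxE.
  by case: (i == i0); rewrite ?(negbTE hjj) ?hbs.
set x := price bs; set h := fun j => price b' j - price bs j.
set Lin := \sum_(i < n) \sum_(j < m) (- (1 + ln (v i j)) * (b' i j - bs i j)).
set C := \sum_(j < m) ((ln (x j) + 1) * h j).
set Q := \sum_(j < m) (h j ^+ 2 / x j).
have hQ : 0 <= Q.
  apply: sumr_ge0 => j _; apply: divr_ge0; rewrite ?sqr_ge0 //.
  exact: price_ge0.
have key : forall s, 0 < s <= 1 ->
    0 <= s * (Lin + C + Q - P) + xlogx (s * P).
  move=> s /andP[s0 s1].
  have s01 : 0 <= s <= 1 by rewrite ltW.
  have hf' := inB_cmb hs hf s01.
  have h1 := hopt _ _ hf'.
  have [hbc _ _] := hf'.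
  have := phi_diff v bs (cmb s bs b').
  rewrite sum_cmb -/Lin.
  have hb2 : \sum_(j < m) (xlogx (price (cmb s bs b') j) - xlogx (price bs j)) <=
     \sum_(j < m) (s * ((ln (x j) + 1) * h j) + s ^+ 2 * (h j ^+ 2 / x j)
     + (if x j == 0 then xlogx (s * h j) - s * h j else 0)).
    apply: ler_sum => j _.
    have -> : price (cmb s bs b') j = x j + s * h j.
      by rewrite price_cmb /x /h; ring.
    apply: xlogx_pert => //; first exact: price_ge0.
    by have := price_ge0 hbc j; rewrite price_cmb /x /h => hh;
       apply: le_trans hh _; rewrite le_eqVlt; apply/orP; left; apply/eqP; ring.
  have hext : \sum_(j < m) (if x j == 0 then xlogx (s * h j) - s * h j else 0)
      = xlogx (s * P) - s * P.
    rewrite (bigD1 j0) //= big1 ?addr0.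
      by rewrite /x -hp0 eqxx /h -hp0 subr0.
    move=> j hj; case: ifP => // /eqP hx0.
    by rewrite /h (off j hx0 hj) (hx0 : price bs j = 0) subrr mulr0 xlogx0 subrr.
  rewrite !big_split /= hext -!mulr_sumr -/C -/Q in hb2.
  have hsq : s ^+ 2 * Q <= s * Q.
    have := mulr_ge0 (ltW s0) hQ; rewrite expr2; nra.
  move=> hd; rewrite big_split /= in hd.
  rewrite !mulrDr mulrN; lra.
set E := expR (- ((`|Lin + C + Q - P| + 1) / P)).
have hE : 0 < E by apply: expR_gt0.
set s := E / (P + E).
have s0 : 0 < s by apply: divr_gt0 => //; lra.
have s1 : s <= 1 by rewrite ler_pdivrMr; lra.
have hsP : s * P <= E.
  rewrite /s mulrAC ler_pdivrMr; last lra.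
  by rewrite mulrDr ler_wpDr // ?mulr_ge0 // ltW.
have hsP0 : 0 < s * P by apply: mulr_gt0.
have hln : ln (s * P) <= - ((`|Lin + C + Q - P| + 1) / P).
  by rewrite -[X in _ <= X]expRK ler_ln ?posrE.
have := key s; rewrite s0 s1 => /(_ isT).
rewrite xlogxE //.
have hK := ler_norm (Lin + C + Q - P).
have e : P * (- ((`|Lin + C + Q - P| + 1) / P)) = - (`|Lin + C + Q - P| + 1).
  by field; rewrite gt_eqF.
have : P * ln (s * P) <= - (`|Lin + C + Q - P| + 1).
  by rewrite -e ler_wpM2l // ltW.
move=> hPl h0.
have e3 : s * P * ln (s * P) = s * (P * ln (s * P)) by ring.
have : s * (Lin + C + Q - P + P * ln (s * P)) < 0 by rewrite pmulr_rlt0 //; lra.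
rewrite mulrDr -e3; lra.
Qed.

End PosSec.
Section MainSec.
Variables (R : realType) (n m : nat).
Implicit Types (b w v : 'M[R]_(n, m)) (d e : 'I_n -> R).

Lemma KLF_geb B b d w e : inB B b d -> inB B w e -> posz w e ->
  \sum_(i < n) \sum_(j < m) D1 (b i j) (w i j) <= KLF b d w e.
Proof.
move=> hb hw [pw pe]; rewrite (KLF_D1 hb hw); apply: ler_sum => i _.
case: hb => _ hd _; rewrite lerDl; exact: D1_ge0.
Qed.

Lemma lin_self v b : lin v b b = 0.
Proof. by rewrite /lin big1 // => i _; rewrite big1 // => j _; rewrite subrr mulr0. Qed.

Lemma entry_le (x B c : R) : 0 <= x -> x <= B -> 0 < B -> 1 <= c ->
  xlogxy x (B / c) <= x * ln c.
Proof.
rewrite le_eqVlt => /orP[/eqP <-|hx] hxB hB hc.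
  by rewrite xlogxy0 mul0r.
have c0 : 0 < c by lra.
rewrite xlogxyE //.
have -> : x / (B / c) = x / B * c by field; rewrite !gt_eqF.
rewrite lnMul ?divr_gt0 //.
have : ln (x / B) <= 0 by apply: ln_le0; rewrite ler_pdivrMr // mul1r.
nra.
Qed.

Lemma K0_bound (B : 'I_n -> R) (bs : 'M[R]_(n, m)) (ds : 'I_n -> R) : (forall i, 0 < B i) -> inB B bs ds ->
  KLF bs ds (\matrix_(i, j) (B i / (m.+1)%:R)) (fun i => B i / (m.+1)%:R)
  <= (\sum_(i < n) B i) * ln ((m.+1)%:R).
Proof.
move=> hB [hb hd hs].
have hc : 1 <= (m.+1)%:R :> R by rewrite ler1n.
have lb : forall i j, bs i j <= B i.
  move=> i j; rewrite -(hs i) (bigD1 j) //= -addrA lerDl.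
  by apply: addr_ge0 => //; apply: sumr_ge0.
have ld : forall i, ds i <= B i.
  move=> i; rewrite -(hs i) lerDr; exact: sumr_ge0.
apply: le_trans (_ : \sum_(i < n) \sum_(j < m) (bs i j * ln (m.+1)%:R)
   + \sum_(i < n) (ds i * ln (m.+1)%:R) <= _).
  apply: lerD; apply: ler_sum => i _.
    by apply: ler_sum => j _; rewrite mxE; apply: entry_le.
  exact: entry_le.
rewrite -big_split mulr_suml; apply: ler_sum => i _ /=.
by rewrite -mulr_suml -mulrDl hs.
Qed.

End MainSec.

Unset Implicit Arguments.
Theorem theorem7 (R : realType) (n m : nat) (v : 'M[R]_(n, m)) (B : 'I_n -> R)
  (bstar : 'M[R]_(n, m)) (dstar : 'I_n -> R)
  (b : nat -> 'M[R]_(n, m)) (d : nat -> 'I_n -> R) :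
  (forall i j, 0 < v i j) ->
  (forall i, 0 < B i) ->
  (* (bstar, dstar) is an optimal solution of the QL-Shmyrev program *)
  inB B bstar dstar ->
  (forall b' d', inB B b' d' -> phi v bstar <= phi v b') ->
  (* initialization *)
  (forall i j, b 0%N i j = B i / (m.+1)%:R) ->
  (forall i, d 0%N i = B i / (m.+1)%:R) ->
  (* mirror descent: (b t.+1, d t.+1) is the argmin over \mathcal{B} *)
  (forall t : nat, inB B (b t.+1) (d t.+1) /\
     (forall b' d', inB B b' d' ->
        md_obj v (b t) (d t) (b t.+1) (d t.+1) <= md_obj v (b t) (d t) b' d')) ->
  forall t : nat, (1 <= t)%N ->
    KLdiv (price (b t)) (price bstar) <= phi v (b t) - phi v bstar /\
    phi v (b t) - phi v bstar <= (\sum_(i < n) B i) * ln ((m.+1)%:R) / t%:R.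
Proof.
move=> hv hB hs hopt h0b h0d hmd t ht.
have [n0|npos] := posnP n.
  subst n.
  have P0 : forall (c : 'M[R]_(0, m)) j, price c j = 0 by move=> c j; rewrite /price big_ord0.
  have Z : forall c : 'M[R]_(0, m), phi v c = 0.
    move=> c; rewrite /phi big_ord0 oppr0 add0r big1 // => j _.
    by rewrite P0 xlogx0.
  rewrite !Z big_ord0 mul0r mul0r subrr /KLdiv; split => //.
  by rewrite !big1 ?subrr ?addr0 // => j _; rewrite !P0 xlogxy0.
have inv : forall t, posz (b t) (d t) /\ inB B (b t) (d t).
  elim => [|k [pk fk]].
    have c0 : 0 < (m.+1)%:R :> R by rewrite ltr0n.
    split; first by split => [i j|i]; rewrite ?h0b ?h0d; apply: divr_gt0.
    split => [i j|i|i]; rewrite ?h0b ?h0d; try (apply: ltW; apply: divr_gt0 => //).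
    under eq_bigr do rewrite h0b.
    rewrite sumr_const card_ord -mulr_natr -natr1; field.
    by rewrite natr1 gt_eqF.
  have [fk1 mk] := hmd k.
  by have [] := step hB pk fk fk1 mk.
have three : forall t b' d', inB B b' d' ->
    md_obj v (b t) (d t) b' d' =
    md_obj v (b t) (d t) (b t.+1) (d t.+1) + KLF b' d' (b t.+1) (d t.+1).
  move=> k; have [pk fk] := inv k; have [fk1 mk] := hmd k.
  by have [] := step hB pk fk fk1 mk.
set K := fun k => KLF bstar dstar (b k) (d k).
have Kge0 : forall k, 0 <= K k.
  move=> k; have [pk fk] := inv k; exact: KLF_ge0 hs fk pk.
set a := fun k => phi v (b k) - phi v bstar.
have onestep : forall k, phi v (b k.+1) <= phi v (b k)
    + md_obj v (b k) (d k) (b k.+1) (d k.+1).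
  move=> k; have [[pbk pdk] fk] := inv k; have [_ fk1] := inv k.+1.
  have [hb1 _ _] := fk1.
  have := smooth npos hv pbk hb1.
  have := KLF_geb fk1 fk (conj pbk pdk).
  rewrite md_objE; lra.
have mono : forall k, a k.+1 <= a k.
  move=> k; have [pk fk] := inv k; have [pk1 fk1] := inv k.+1.
  have := three k _ _ fk; rewrite md_objE lin_self KLF_self add0r.
  have := KLF_ge0 fk fk1 pk1; have := onestep k; rewrite /a; lra.
have desc : forall k, a k.+1 <= K k - K k.+1.
  move=> k; have [[pbk pdk] fk] := inv k.
  have := three k _ _ hs; rewrite md_objE -/(K k) -/(K k.+1).
  have [hbs _ _] := hs.
  have := phi_exp hv (price_gt0 npos pbk) (price_ge0 hbs).
  have : 0 <= \sum_(j < m) D1 (price bstar j) (price (b k) j).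
    apply: sumr_ge0 => j _; apply: D1_ge0; first exact: price_ge0.
    exact: price_gt0.
  have := onestep k; rewrite /a; lra.
have ind : forall k, k%:R * a k <= K 0%N - K k.
  elim => [|k IH]; first by rewrite mul0r subrr.
  have := mono k; have := desc k.
  have : k%:R * a k.+1 <= k%:R * a k by rewrite ler_wpM2l // ler0n.
  rewrite -natr1 mulrDl mul1r; lra.
have K0 : K 0%N <= (\sum_(i < n) B i) * ln ((m.+1)%:R).
  rewrite /K; have -> : b 0%N = \matrix_(i, j) (B i / (m.+1)%:R).
    by apply/matrixP => i j; rewrite mxE h0b.
  have -> : d 0%N = (fun i => B i / (m.+1)%:R) by apply: funext => i; rewrite h0d.
  exact: K0_bound.
split.
  have pstar := POS npos hv hB hs hopt.
  have [pk fk] := inv t; have [hbt _ _] := fk.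
  have := phi_exp hv pstar (price_ge0 hbt).
  have := FO hv hs hopt pstar fk.
  have -> : KLdiv (price (b t)) (price bstar) =
      \sum_(j < m) D1 (price (b t) j) (price bstar j).
    by rewrite /KLdiv /D1 big_split /= sumrB.
  lra.
have t0 : 0 < t%:R :> R by rewrite ltr0n.
rewrite ler_pdivlMr // mulrC.
have := ind t; have := Kge0 t; rewrite /a; lra.
Qed.
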